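(* Let $H$, $L$ be as in the context and let $(S,\mathcal T_0)$ be any feasible solution. Then $d(S,\mathcal T_0)\le d_{UB}:=\lfloor L/\omega(H)\rfloor$.
   Context: Notation: $[n)=\{0,1,\dots,n-1\}$. Let $M,N,Z$ be positive integers and let $H$ be a binary $MZ\times NZ$ matrix made of $M\times N$ blocks, each a $Z\times Z$ circulant; assume $H$ has no zero row and no two identical rows. For $\mathcal A\subseteq[MZ)$, $H_{\mathcal A}$ is the submatrix of rows indexed by $\mathcal A$ (in increasing order); $\omega(A)$ is the maximum Hamming weight of a column of $A$ (with $\omega$ of the empty matrix equal to $0$). For $i\in[MZ)$ and integer $s$, $\pi^s(i)=Z\lfloor i/Z\rfloor+((i+s)\bmod Z)$ and $\pi^s(\mathcal T)=\{\pi^s(x):x\in\mathcal T\}$. Fix an integer $L>1$. A pair $(S,\mathcal T_0)$ ($S$ a positive integer, $\mathcal T_0\subseteq[MZ)$) is a feasible solution if, with $\mathcal T_l=\pi^{lS}(\mathcal T_0)$ for $l\in[L)$, the sets $\mathcal T_0,\dots,\mathcal T_{L-1}$ are pairwise disjoint with union $[MZ)$. The layer distance $d(S,\mathcal T_0)$ is the largest $l\in[L)$ such that the matrix obtained by stacking $H_{\mathcal T_0},\dots,H_{\mathcal T_{l-1}}$ vertically has maximum column weight at most $1$ (for $l=0$ the stack is empty). *)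

(* Defs.v *)
From mathcomp Require Import all_boot all_algebra.
Set Implicit Arguments. Unset Strict Implicit. Unset Printing Implicit Defensive.

(* pi^s(i) = Z*floor(i/Z) + ((i+s) mod Z); shifts are nonnegative here (s = l*S). *)
Definition pi (Z s i : nat) : nat := Z * (i %/ Z) + (i + s) %% Z.

(* entry of a matrix at nat indices (false outside the range) *)
Definition entry (m n : nat) (H : 'M[bool]_(m, n)) (r c : nat) : bool :=
  match (insub r : option 'I_m), (insub c : option 'I_n) with
  | Some i, Some j => H i j
  | _, _ => false
  end.

(* H is made of M x N blocks, each a Z x Z circulant:
   within every block, entry (r+1 mod Z, c+1 mod Z) equals entry (r, c). *)
Definition circulant_blocks (M N Z : nat) (H : 'M[bool]_(M * Z, N * Z)) : Prop :=
  forall (i : 'I_(M * Z)) (j : 'I_(N * Z)), entry H (pi Z 1 i) (pi Z 1 j) = H i j.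

Definition no_zero_row (m n : nat) (H : 'M[bool]_(m, n)) : Prop :=
  forall i : 'I_m, exists j : 'I_n, H i j.

Definition distinct_rows (m n : nat) (H : 'M[bool]_(m, n)) : Prop :=
  forall i i' : 'I_m, (forall j : 'I_n, H i j = H i' j) -> i = i'.

Definition layer (m Z s : nat) (T0 : {set 'I_m}) : {set 'I_m} :=
  [set i : 'I_m | [exists x in T0, val i == pi Z s (val x)]].

Definition feasible (M Z L S : nat) (T0 : {set 'I_(M * Z)}) : Prop :=
  0 < S /\
  (forall l1 l2, l1 < L -> l2 < L -> l1 != l2 ->
     [disjoint layer Z (l1 * S) T0 & layer Z (l2 * S) T0]) /\
  \bigcup_(l < L) layer Z (l * S) T0 = [set: 'I_(M * Z)].

Definition colweight (m n : nat) (H : 'M[bool]_(m, n)) (A : {set 'I_m}) (j : 'I_n) : nat :=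
  #|[set i in A | H i j]|.

(* omega(H_A): maximum column weight (0 for an empty matrix) *)
Definition omega (m n : nat) (H : 'M[bool]_(m, n)) (A : {set 'I_m}) : nat :=
  \max_(j < n) colweight H A j.

Definition stack_ok (M N Z : nat) (H : 'M[bool]_(M * Z, N * Z)) (S : nat)
  (T0 : {set 'I_(M * Z)}) (l : nat) : bool :=
  [forall j : 'I_(N * Z), \sum_(k < l) colweight H (layer Z (k * S) T0) j <= 1].

Definition layer_distance (M N Z L : nat) (H : 'M[bool]_(M * Z, N * Z)) (S : nat)
  (T0 : {set 'I_(M * Z)}) : nat :=
  \max_(l < L | stack_ok H S T0 l) l.

(* Main.v *)
Require Import Defs.
From mathcomp Require Import all_boot all_algebra.
From mathcomp Require Import zify.
Local Notation pi := Defs.pi.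

Section Aux.
Variables (Z : nat) (HZ : 0 < Z).

Lemma pi_lt M t x : x < M * Z -> pi Z t x < M * Z.
Proof.
move=> hx; rewrite /pi.
have hq : x %/ Z < M by rewrite ltn_divLR.
have hr : (x + t) %% Z < Z by rewrite ltn_mod.
have : Z * (x %/ Z) + Z <= M * Z by rewrite -mulnSr mulnC leq_mul2r hq orbT.
lia.
Qed.

Lemma pi_comp a b x : pi Z a (pi Z b x) = pi Z (b + a) x.
Proof.
rewrite /pi.
have hr : (x + b) %% Z < Z by rewrite ltn_mod.
rewrite [Z * (x %/ Z)]mulnC divnMDl // (divn_small hr) addn0.
congr (_ + _); first by rewrite mulnC.
by rewrite -addnA modnMDl modnDml addnA.
Qed.

Lemma pi_mod a b x : a %% Z = b %% Z -> pi Z a x = pi Z b x.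
Proof. by move=> e; rewrite /pi -modnDmr e modnDmr. Qed.

Lemma pi0 x : pi Z 0 x = x.
Proof. by rewrite /pi addn0 [in RHS](divn_eq x Z) mulnC. Qed.

Definition inv t := Z - t %% Z.

Lemma inv_mod t : (t + inv t) %% Z = 0 %% Z.
Proof.
rewrite /inv -modnDml.
have : t %% Z < Z by rewrite ltn_mod.
move=> h; rewrite subnKC ?modnn ?mod0n //; exact: ltnW.
Qed.

Lemma pi_inv t x : pi Z (inv t) (pi Z t x) = x.
Proof. by rewrite pi_comp (pi_mod _ _ _ (inv_mod t)) pi0. Qed.

Lemma pi_inv' t x : pi Z t (pi Z (inv t) x) = x.
Proof. by rewrite pi_comp addnC (pi_mod _ _ _ (inv_mod t)) pi0. Qed.

Definition po M t (i : 'I_(M * Z)) : 'I_(M * Z) := Ordinal (@pi_lt M t i (ltn_ord i)).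
Arguments po {M} t i.

Lemma po_inj M t : injective (@po M t).
Proof.
move=> x y /(congr1 val) /= e; apply: val_inj => /=.
by rewrite -(pi_inv t x) e pi_inv.
Qed.

Lemma po_inv M t (i : 'I_(M * Z)) : po t (po (inv t) i) = i.
Proof. by apply: val_inj; rewrite /= pi_inv'. Qed.

Lemma po_inv' M t (i : 'I_(M * Z)) : po (inv t) (po t i) = i.
Proof. by apply: val_inj; rewrite /= pi_inv. Qed.

Lemma card_inj n (g : 'I_n -> 'I_n) (A B : {set 'I_n}) :
  injective g -> (forall x, x \in A -> g x \in B) -> #|A| <= #|B|.
Proof.
move=> gi h; rewrite -(card_imset A gi); apply: subset_leq_card.
by apply/subsetP => _ /imsetP [x xA ->]; apply: h.
Qed.

Variables (M N : nat) (H : 'M[bool]_(M * Z, N * Z)).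
Hypothesis circ : circulant_blocks H.

Lemma entry_ord (i : 'I_(M * Z)) (j : 'I_(N * Z)) : entry H i j = H i j.
Proof. by rewrite /entry !valK. Qed.

Lemma circ_t t i j : H (po t i) (po t j) = H i j.
Proof.
elim: t => [|t IH].
  by congr (H _ _); apply: val_inj; rewrite /= pi0.
rewrite -IH -(circ (po t i) (po t j)).
have ei : po t.+1 i = po 1 (po t i) by apply: val_inj; rewrite /= pi_comp addn1.
have ej : po t.+1 j = po 1 (po t j) by apply: val_inj; rewrite /= pi_comp addn1.
by rewrite ei ej -entry_ord.
Qed.

Variable T0 : {set 'I_(M * Z)}.

Lemma layerA_fwd s t j :
  colweight H (layer Z s T0) j <= colweight H (layer Z (s + t) T0) (po t j).
Proof.
apply: (@card_inj _ (po t)); first exact: po_inj.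
move=> x; rewrite !inE => /andP [/existsP [y /andP [yT /eqP ex]] hx].
rewrite circ_t hx andbT; apply/existsP; exists y; rewrite yT /= ex pi_comp.
by [].
Qed.

Lemma layerA_rev s t j :
  colweight H (layer Z (s + t) T0) (po t j) <= colweight H (layer Z s T0) j.
Proof.
apply: (@card_inj _ (po (inv t))); first exact: po_inj.
move=> x; rewrite !inE => /andP [/existsP [y /andP [yT /eqP ex]] hx].
have := circ_t (inv t) x (po t j); rewrite po_inv' => ->.
rewrite hx andbT; apply/existsP; exists y.
rewrite yT /= ex pi_comp; apply/eqP; apply: pi_mod.
by rewrite -addnA -modnDmr inv_mod modnDmr addn0.
Qed.

Lemma colT_shift u j :
  colweight H [set: 'I_(M * Z)] j <= colweight H [set: 'I_(M * Z)] (po u j).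
Proof.
apply: (@card_inj _ (po u)); first exact: po_inj.
by move=> x; rewrite !inE circ_t.
Qed.

End Aux.


Lemma cw_sum (m n : nat) (H : 'M[bool]_(m, n)) (A : {set 'I_m}) j :
  colweight H A j = \sum_i ((i \in A) && H i j : nat).
Proof.
rewrite /colweight -sum1_card big_mkcond; apply: eq_bigr => i _.
by rewrite inE; case: (_ && _).
Qed.

Theorem theorem6 (M N Z L : nat) (H : 'M[bool]_(M * Z, N * Z))
  (S : nat) (T0 : {set 'I_(M * Z)}) :
  0 < M -> 0 < N -> 0 < Z -> 1 < L ->
  circulant_blocks H -> no_zero_row H -> distinct_rows H ->
  feasible L S T0 ->
  layer_distance L H S T0 <= L %/ omega H [set: 'I_(M * Z)].
Proof.
move=> M0 N0 Z0 L1 circ nz _ [S0 [disj cover]].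
set w := omega H [set: 'I_(M * Z)].
have [j0 ej0] : {j0 : 'I_(N * Z) | w = colweight H [set: 'I_(M * Z)] j0}.
  apply: eq_bigmax; by rewrite card_ord muln_gt0 N0 Z0.
have w0 : 0 < w.
  have MZ : 0 < M * Z by rewrite muln_gt0 M0 Z0.
  have [j hj] := nz (Ordinal MZ).
  apply: (@leq_trans (colweight H [set: 'I_(M * Z)] j)); last exact: (leq_bigmax j).
  rewrite /colweight card_gt0; apply/set0Pn; exists (Ordinal MZ).
  by rewrite !inE hj.
have part : forall j, \sum_(m < L) colweight H (layer Z (m * S) T0) j
                      = colweight H [set: 'I_(M * Z)] j.
  move=> j; rewrite cw_sum.
  transitivity (\sum_(m < L) \sum_i ((i \in layer Z (m * S) T0) && H i j : nat)).
    by apply: eq_bigr => m _; rewrite cw_sum.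
  rewrite exchange_big; apply: eq_bigr => i _.
  have : i \in \bigcup_(l < L) layer Z (l * S) T0 by rewrite cover.
  move=> /bigcupP [m0 _ im0].
  rewrite (bigD1 m0) //= im0 big1 ?addn0 ?in_setT // => m ne.
  rewrite (disjointFr (disj m0 m (ltn_ord m0) (ltn_ord m) _) im0) //.
  by rewrite eq_sym.
rewrite /layer_distance; apply/bigmax_leqP => l /forallP ok.
rewrite leq_divRL //.
apply: (@leq_trans (\sum_(k < l) \sum_(m < L)
          colweight H (layer Z (m * S + k * S) T0) j0)).
  rewrite -[l in l * w]card_ord -sum_nat_const; apply: leq_sum => k _.
  set t := k * S.
  have e : j0 = po Z Z0 N t (po Z Z0 N (inv Z t) j0) by rewrite po_inv.
  rewrite ej0 {2}e.
  apply: (leq_trans (@colT_shift _ Z0 _ _ _ circ (inv Z t) j0)).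
  rewrite -part; apply: leq_sum => m _.
  exact: layerA_fwd.
rewrite exchange_big.
apply: (@leq_trans (\sum_(m < L) 1)); last by rewrite sum_nat_const card_ord muln1.
apply: leq_sum => m _.
under eq_bigr do rewrite addnC.
set t := m * S.
have e : j0 = po Z Z0 N t (po Z Z0 N (inv Z t) j0) by rewrite po_inv.
rewrite {1}e.
apply: leq_trans (ok (po Z Z0 N (inv Z t) j0)).
apply: leq_sum => k _.
exact: layerA_rev.
Qed.
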